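(* Let $\mathcal C$ be an uncountable algebraically closed field of characteristic zero and $p\ge2$ an integer. Let $X\subset GL_n(\mathcal C)$ be the Zariski closed set of all $v$ satisfying: (1) $(v^m)^{(p)}=(v^{(p)})^m$ for all $m\ge0$, and (2) $(v^m)^{(p)}(v^{-m})^{(p)}=1$ for all $m\ge0$ (equalities in $\mathfrak{gl}_n(\mathcal C)$). Then $X$ has exactly one irreducible component passing through $1$, and that component is the group $T$ of diagonal matrices in $GL_n(\mathcal C)$.
   Context: For a matrix $v=(v_{ij})$, $v^{(p)}=(v_{ij}^p)$ denotes the entrywise $p$-th power. *)

(* Defs.v *)
From HB Require Import structures.
From mathcomp Require Import all_boot all_order all_algebra.
From mathcomp Require Import mpoly.
Set Implicit Arguments. Unset Strict Implicit. Unset Printing Implicit Defensive.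
Import GRing.Theory.
Local Open Scope ring_scope.

Section Zariski.
Variables (C : fieldType) (n : nat).

Definition inGL (v : 'M[C]_n) : Prop := v \in unitmx.

Definition mx_eval (f : {mpoly C[n * n]}) (v : 'M[C]_n) : C :=
  f.@[fun k => mxvec v 0 k].

(* Zariski closed subsets of GL_n(C): intersections of GL_n with common zero
   loci of families of polynomials in the matrix entries.  (Zariski closed
   sets of the affine variety GL_n are exactly these, since det is invertible
   on GL_n.) *)
Definition zclosed (A : 'M[C]_n -> Prop) : Prop :=
  exists S : {mpoly C[n * n]} -> Prop,
    forall v, A v <-> (inGL v /\ forall f, S f -> mx_eval f v = 0).

Definition zirreducible (Y : 'M[C]_n -> Prop) : Prop :=
  (forall v, Y v -> inGL v) /\ (exists v, Y v) /\
  forall F1 F2, zclosed F1 -> zclosed F2 ->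
    (forall v, Y v -> F1 v \/ F2 v) ->
    (forall v, Y v -> F1 v) \/ (forall v, Y v -> F2 v).

Definition irr_component (X Y : 'M[C]_n -> Prop) : Prop :=
  zirreducible Y /\ (forall v, Y v -> X v) /\
  forall Z, zirreducible Z -> (forall v, Z v -> X v) ->
    (forall v, Y v -> Z v) -> forall v, Z v -> Y v.

End Zariski.

Definition epow (C : ringType) (n p : nat) (v : 'M[C]_n) : 'M[C]_n :=
  map_mx (fun x => x ^+ p) v.

Definition Xset (C : fieldType) (n p : nat) (v : 'M[C]_n) : Prop :=
  v \in unitmx /\
  forall m : nat,
    epow p (v ^+ m) = (epow p v) ^+ m /\
    epow p (v ^+ m) *m epow p (invmx (v ^+ m)) = 1%:M.

Definition diagT (C : fieldType) (n : nat) (v : 'M[C]_n) : Prop :=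
  v \in unitmx /\ forall i j : 'I_n, i != j -> v i j = 0.

Definition uncountable (T : Type) : Prop :=
  forall f : nat -> T, exists x : T, forall k, f k <> x.

(* Main.v *)
Require Import Defs.
From HB Require Import structures.
From mathcomp Require Import all_boot all_order all_algebra.
From mathcomp Require Import mpoly.
From mathcomp Require Import perm.
From mathcomp Require Import ring zify.
From Stdlib Require Import Classical FunctionalExtensionality PropExtensionality.
Set Implicit Arguments. Unset Strict Implicit. Unset Printing Implicit Defensive.
Import GRing.Theory.
Local Open Scope ring_scope.

Definition polyf (C : fieldType) (n : nat) (f : 'M[C]_n -> C) : Prop :=
  exists q : {mpoly C[n * n]}, forall v, f v = mx_eval q v.

Lemma polyf_ext (C : fieldType) (n : nat) (f g : 'M[C]_n -> C) :
  (forall v, f v = g v) -> polyf f -> polyf g.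
Proof. by move=> e [q hq]; exists q => v; rewrite -e. Qed.

Lemma polyf_cst (C : fieldType) (n : nat) (c : C) : polyf (fun _ : 'M[C]_n => c).
Proof. by exists c%:MP => v; rewrite /mx_eval mevalC. Qed.

Lemma polyf_coord (C : fieldType) (n : nat) (i j : 'I_n) : polyf (fun v : 'M[C]_n => v i j).
Proof. by exists 'X_(mxvec_index i j) => v; rewrite /mx_eval mevalXU mxvecE. Qed.

Lemma polyf_add (C : fieldType) (n : nat) (f g : 'M[C]_n -> C) :
  polyf f -> polyf g -> polyf (fun v => f v + g v).
Proof. by move=> [q hq] [r hr]; exists (q + r) => v; rewrite /mx_eval mevalD hq hr. Qed.

Lemma polyf_mul (C : fieldType) (n : nat) (f g : 'M[C]_n -> C) :
  polyf f -> polyf g -> polyf (fun v => f v * g v).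
Proof. by move=> [q hq] [r hr]; exists (q * r) => v; rewrite /mx_eval mevalM hq hr. Qed.

Lemma polyf_opp (C : fieldType) (n : nat) (f : 'M[C]_n -> C) :
  polyf f -> polyf (fun v => - f v).
Proof. by move=> [q hq]; exists (- q) => v; rewrite /mx_eval mevalN hq. Qed.

Lemma polyf_sub (C : fieldType) (n : nat) (f g : 'M[C]_n -> C) :
  polyf f -> polyf g -> polyf (fun v => f v - g v).
Proof. by move=> hf hg; apply: polyf_add => //; apply: polyf_opp. Qed.

Lemma polyf_exp (C : fieldType) (n : nat) (f : 'M[C]_n -> C) k :
  polyf f -> polyf (fun v => f v ^+ k).
Proof.
move=> hf; elim: k => [|k IH]; first by apply: polyf_ext (polyf_cst _ _) => v; rewrite expr0.
by apply: polyf_ext (polyf_mul hf IH) => v; rewrite exprS.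
Qed.

Lemma polyf_sum (C : fieldType) (n : nat) (I : Type) (r : seq I) (P : pred I)
  (F : I -> 'M[C]_n -> C) :
  (forall i, P i -> polyf (F i)) -> polyf (fun v => \sum_(i <- r | P i) F i v).
Proof.
move=> hF; elim: r => [|a r IH].
  by apply: polyf_ext (polyf_cst _ 0) => v; rewrite big_nil.
case Pa: (P a).
  by apply: polyf_ext (polyf_add (hF a Pa) IH) => v; rewrite big_cons Pa.
by apply: polyf_ext IH => v; rewrite big_cons Pa.
Qed.

Lemma polyf_prod (C : fieldType) (n : nat) (I : Type) (r : seq I) (P : pred I)
  (F : I -> 'M[C]_n -> C) :
  (forall i, P i -> polyf (F i)) -> polyf (fun v => \prod_(i <- r | P i) F i v).
Proof.
move=> hF; elim: r => [|a r IH].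
  by apply: polyf_ext (polyf_cst _ 1) => v; rewrite big_nil.
case Pa: (P a).
  by apply: polyf_ext (polyf_mul (hF a Pa) IH) => v; rewrite big_cons Pa.
by apply: polyf_ext IH => v; rewrite big_cons Pa.
Qed.

Definition PM (C : fieldType) (n d e : nat) (A : 'M[C]_n -> 'M[C]_(d, e)) : Prop :=
  forall i j, polyf (fun v => A v i j).

Lemma PM_id (C : fieldType) (n : nat) : PM (fun v : 'M[C]_n => v).
Proof. by move=> i j; apply: polyf_coord. Qed.

Lemma PM_mul (C : fieldType) (n d e f : nat) (A : 'M[C]_n -> 'M[C]_(d, e)) (B : 'M[C]_n -> 'M[C]_(e, f)) :
  PM A -> PM B -> PM (fun v => A v *m B v).
Proof.
move=> hA hB i j.
have h := @polyf_sum C n 'I_e (index_enum 'I_e) predT (fun k v => A v i k * B v k j) (fun k _ => polyf_mul (hA i k) (hB k j)).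
by apply: polyf_ext h => v; rewrite mxE.
Qed.

Lemma PM_sub (C : fieldType) (n d e : nat) (A B : 'M[C]_n -> 'M[C]_(d, e)) :
  PM A -> PM B -> PM (fun v => A v - B v).
Proof. by move=> hA hB i j; apply: polyf_ext (polyf_sub (hA i j) (hB i j)) => v; rewrite !mxE. Qed.

Lemma PM_epow (C : fieldType) (n d p : nat) (A : 'M[C]_n -> 'M[C]_d) :
  PM A -> PM (fun v => epow p (A v)).
Proof. by move=> hA i j; apply: polyf_ext (polyf_exp p (hA i j)) => v; rewrite /epow mxE. Qed.

Lemma PM_exp (C : fieldType) (n d : nat) (A : 'M[C]_n -> 'M[C]_d) m :
  PM A -> PM (fun v => A v ^+ m).
Proof.
move=> hA; elim: m => [|m IH] i j.
  apply: polyf_ext (polyf_cst _ ((1%:M : 'M[C]_d) i j)) => v; by rewrite expr0.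
by apply: polyf_ext (PM_mul hA IH i j) => v; rewrite exprS mulmxE.
Qed.

Lemma polyf_det (C : fieldType) (n d : nat) (A : 'M[C]_n -> 'M[C]_d) :
  PM A -> polyf (fun v => \det (A v)).
Proof.
move=> hA.
have h := @polyf_sum C n _ (index_enum 'S_d) predT
  (fun s v => (-1) ^+ s * \prod_i A v i (s i))
  (fun s _ => polyf_mul (polyf_cst _ _) (@polyf_prod C n _ _ predT (fun i v => A v i (s i)) (fun i _ => hA i (s i)))).
by apply: polyf_ext h => v.
Qed.

Lemma PM_adj (C : fieldType) (n d : nat) (A : 'M[C]_n -> 'M[C]_d) :
  PM A -> PM (fun v => \adj (A v)).
Proof.
move=> hA i j; apply: polyf_ext (polyf_mul (polyf_cst _ ((-1) ^+ (j + i))) (polyf_det (A := fun v => row' j (col' i (A v))) _)).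
  by move=> v; rewrite mxE /cofactor.
by move=> k l; apply: polyf_ext (hA _ _) => v; rewrite !mxE.
Qed.

Lemma PM_scal1 (C : fieldType) (n d : nat) (c : 'M[C]_n -> C) :
  polyf c -> PM (fun v => c v *: (1%:M : 'M[C]_d)).
Proof.
move=> hc i j.
have h := polyf_mul hc (polyf_cst n ((1%:M : 'M[C]_d) i j)).
by apply: polyf_ext h => v /=; rewrite !mxE.
Qed.

Lemma unitmxX (C : fieldType) (n : nat) (v : 'M[C]_n) m : v \in unitmx -> v ^+ m \in unitmx.
Proof.
move=> hv; elim: m => [|m IH]; first by rewrite expr0 unitmx1.
by rewrite exprS -mulmxE unitmx_mul hv IH.
Qed.

Lemma epowZ (C : fieldType) (n p : nat) (c : C) (A : 'M[C]_n) :
  epow p (c *: A) = c ^+ p *: epow p A.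
Proof. by apply/matrixP => i j; rewrite !mxE exprMn. Qed.

Lemma cond2E (C : fieldType) (n p : nat) (V : 'M[C]_n) : V \in unitmx ->
  (epow p V *m epow p (invmx V) = 1%:M) <->
  (epow p V *m epow p (\adj V) - (\det V) ^+ p *: 1%:M = 0).
Proof.
move=> hV; have hd : \det V != 0 by rewrite -unitfE -unitmxE.
rewrite /invmx hV epowZ -scalemxAr; split.
  move=> h; apply/eqP; rewrite subr_eq0; apply/eqP.
  by rewrite -h scalerA -exprMn mulfV // expr1n scale1r.
move/eqP; rewrite subr_eq0 => /eqP ->.
by rewrite scalerA -exprMn mulVf // expr1n scale1r.
Qed.

Definition E1 (C : fieldType) (n p m : nat) (i j : 'I_n) (v : 'M[C]_n) : C :=
  (epow p (v ^+ m) - epow p v ^+ m) i j.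
Definition E2 (C : fieldType) (n p m : nat) (i j : 'I_n) (v : 'M[C]_n) : C :=
  (epow p (v ^+ m) *m epow p (\adj (v ^+ m)) - (\det (v ^+ m)) ^+ p *: 1%:M) i j.

Lemma Xset_zclosed (C : fieldType) (n p : nat) : zclosed (Xset (C := C) (n := n) p).
Proof.
have hX : forall m, PM (fun v : 'M[C]_n => v ^+ m) by move=> m; apply: PM_exp; apply: PM_id.
have h1 : forall m (i j : 'I_n), polyf (E1 (C:=C) p m i j).
  move=> m i j; have := PM_sub (A := fun v : 'M[C]_n => epow p (v ^+ m)) (B := fun v => epow p v ^+ m).
  move=> /(_ (PM_epow _ (hX m)) (PM_exp m (PM_epow _ (@PM_id C n))) i j) h.
  by apply: polyf_ext h.
have h2 : forall m (i j : 'I_n), polyf (E2 (C:=C) p m i j).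
  move=> m i j; have := PM_sub (A := fun v : 'M[C]_n => epow p (v ^+ m) *m epow p (\adj (v ^+ m))) (B := fun v => (\det (v ^+ m)) ^+ p *: 1%:M).
  move=> /(_ (PM_mul (PM_epow _ (hX m)) (PM_epow _ (PM_adj (hX m))))) /(_ (PM_scal1 (polyf_exp _ (polyf_det (hX m))))) /(_ i j) h.
  by apply: polyf_ext h.
exists (fun f => exists m i j, (forall v, mx_eval f v = E1 p m i j v) \/
                               (forall v, mx_eval f v = E2 p m i j v)) => v.
split.
  move=> [hv hm]; split => // f [m [i [j [e|e]]]]; rewrite e.
    by rewrite /E1 (proj1 (hm m)) subrr mxE.
  rewrite /E2; have /(cond2E p) := unitmxX m hv.
  by move=> [/(_ (proj2 (hm m))) -> _]; rewrite mxE.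
move=> [hv hf]; split => // m; split.
  apply/eqP; rewrite -subr_eq0; apply/eqP/matrixP => i j.
  have [q hq] := h1 m i j; rewrite [RHS]mxE.
  transitivity (E1 p m i j v); first by [].
  by rewrite hq hf //; exists m, i, j; left.
apply/(cond2E p (unitmxX m hv))/matrixP => i j.
have [q hq] := h2 m i j; rewrite [RHS]mxE.
transitivity (E2 p m i j v); first by [].
by rewrite hq hf //; exists m, i, j; right.
Qed.

Lemma polyf_line (C : fieldType) (n : nat) (f : 'M[C]_n -> C) (A B : 'M[C]_n) :
  polyf f -> exists q : {poly C}, forall s, f (A + s *: B) = q.[s].
Proof.
move=> [q0 hq].
exists (\sum_(m <- msupp q0) (q0@_m)%:P * \prod_i ((mxvec A 0 i)%:P + mxvec B 0 i *: 'X) ^+ (m i)).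
move=> s; rewrite hq /mx_eval mevalE horner_sum; apply: eq_bigr => m _.
rewrite hornerM hornerC horner_prod; congr (_ * _); apply: eq_bigr => i _.
by rewrite horner_exp hornerD hornerC hornerZ hornerX linearD linearZ /= !mxE mulrC.
Qed.

Lemma natr_inj0 (C : fieldType) : [pchar C] =i pred0 -> forall a b : nat, (a%:R : C) = b%:R -> a = b.
Proof.
move=> h0 a b; have hc := (pcharf0P C).1 h0.
wlog le : a b / (a <= b)%N => [W|] e.
  case: (leqP a b) => l; first exact: W.
  by symmetry; apply: W => //; apply: ltnW.
by apply/eqP; rewrite eqn_leq le /= -subn_eq0 -hc natrB // e subrr eqxx.
Qed.

Lemma poly_allroots0 (C : fieldType) : [pchar C] =i pred0 ->
  forall q : {poly C}, (forall s, q.[s] = 0) -> q = 0.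
Proof.
move=> h0 q hq; apply: (@roots_geq_poly_eq0 _ q [seq (i%:R : C) | i <- iota 0 (size q)]).
- by apply/allP => x _; apply/eqP; apply: hq.
- rewrite map_inj_uniq ?iota_uniq //; exact: natr_inj0.
- by rewrite size_map size_iota.
Qed.

Lemma diag_line (C : fieldType) (n : nat) (t1 t2 : 'M[C]_n) s :
  (forall i j : 'I_n, i != j -> t1 i j = 0) -> (forall i j : 'I_n, i != j -> t2 i j = 0) ->
  forall i j : 'I_n, i != j -> (t1 + s *: t2) i j = 0.
Proof. by move=> h1 h2 i j ij; rewrite !mxE h1 // h2 // mulr0 addr0. Qed.

Lemma diag_det (C : fieldType) (n : nat) (t : 'M[C]_n) :
  (forall i j : 'I_n, i != j -> t i j = 0) -> \det t = \prod_i t i i.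
Proof.
move=> h; have E : t = diag_mx (\row_i t i i).
  apply/matrixP => i j; rewrite !mxE; have [->|ne] := eqVneq i j; first by rewrite ?eqxx mulr1n.
  by rewrite h // ?(negbTE ne) ?mulr0n.
by rewrite {1}E det_diag; apply: eq_bigr => i _; rewrite mxE.
Qed.

Lemma diagT_irr (C : fieldType) (n : nat) : [pchar C] =i pred0 -> zirreducible (@diagT C n).
Proof.
move=> h0; split; first by move=> v; rewrite /diagT /inGL; case.
split; first by exists 1%:M; split; [exact: unitmx1| move=> i j /negbTE ij; rewrite mxE ij].
move=> F1 F2 [S1 hS1] [S2 hS2] cov.
case: (classic (forall v, diagT v -> F1 v)) => [h|nn1]; first by left.
right; apply: NNPP => n2.
have [t1 H1] := not_all_ex_not _ _ nn1.
have [d1 nF1] := imply_to_and _ _ H1.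
have [t2 H2] := not_all_ex_not _ _ n2.
have [d2 nF2] := imply_to_and _ _ H2.
have [f1 [Sf1 nf1]] : exists f, S1 f /\ mx_eval f t1 <> 0.
  apply: NNPP => hn; apply: nF1; apply/hS1; split; first exact: d1.1.
  move=> f Sf; apply: NNPP => hf; apply: hn; by exists f.
have [f2 [Sf2 nf2]] : exists f, S2 f /\ mx_eval f t2 <> 0.
  apply: NNPP => hn; apply: nF2; apply/hS2; split; first exact: d2.1.
  move=> f Sf; apply: NNPP => hf; apply: hn; by exists f.
have dd : forall i j : 'I_n, i != j -> (t2 - t1) i j = 0.
  by move=> i j ij; rewrite !mxE d1.2 // d2.2 // subrr.
have [q1 hq1] := polyf_line t1 (t2 - t1) (f := mx_eval f1) (ex_intro _ f1 (fun _ => erefl)).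
have [q2 hq2] := polyf_line t1 (t2 - t1) (f := mx_eval f2) (ex_intro _ f2 (fun _ => erefl)).
have [r hr] := polyf_line t1 (t2 - t1)
  (@polyf_prod C n _ (index_enum 'I_n) predT (fun i v => v i i) (fun i _ => @polyf_coord C n i i)).
have Q0 : q1 * q2 * r = 0.
  apply: (poly_allroots0 h0) => s; rewrite !hornerM -hq1 -hq2 -hr.
  have [->|rs] := eqVneq (\prod_i (t1 + s *: (t2 - t1)) i i) 0; first by rewrite mulr0.
  have dT : diagT (t1 + s *: (t2 - t1)).
    split; last exact: diag_line s d1.2 dd.
    by rewrite unitmxE unitfE (diag_det (diag_line s d1.2 dd)).
  case: (cov _ dT) => [/hS1 [_ /(_ _ Sf1) ->]|/hS2 [_ /(_ _ Sf2) ->]]; by rewrite !(mul0r, mulr0).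
have e0 : forall (q : {poly C}) x, q.[x] != 0 -> q != 0 by move=> q x; apply: contraNneq => ->; rewrite horner0.
move: Q0; apply/eqP; rewrite !mulf_eq0 !negb_or; apply/andP; split; first (apply/andP; split).
- by apply: (e0 _ 0); rewrite -hq1 scale0r addr0; apply/eqP.
- by apply: (e0 _ 1); rewrite -hq2 scale1r addrC subrK; apply/eqP.
- apply: (e0 _ 0); rewrite -hr scale0r addr0 -(diag_det d1.2) -unitfE -unitmxE; exact: d1.1.
Qed.

Definition isdiag (C : fieldType) (n : nat) (A : 'M[C]_n) := forall i j : 'I_n, i != j -> A i j = 0.

Lemma diag_mulE (C : fieldType) (n : nat) (A B : 'M[C]_n) i j :
  isdiag A -> (A *m B) i j = A i i * B i j.
Proof.
move=> hA; rewrite mxE (bigD1 i) //= big1 ?addr0 // => k ki.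
by rewrite hA ?mul0r // eq_sym.
Qed.

Lemma isdiag_mul (C : fieldType) (n : nat) (A B : 'M[C]_n) :
  isdiag A -> isdiag B -> isdiag (A *m B).
Proof. by move=> hA hB i j ij; rewrite diag_mulE // hB // mulr0. Qed.

Lemma isdiag_epow (C : fieldType) (n p : nat) (A : 'M[C]_n) :
  (0 < p)%N -> isdiag A -> isdiag (epow p A).
Proof. by move=> hp hA i j ij; rewrite mxE hA // expr0n eqn0Ngt hp. Qed.

Lemma epow_diagM (C : fieldType) (n p : nat) (A B : 'M[C]_n) :
  (0 < p)%N -> isdiag A -> epow p (A *m B) = epow p A *m epow p B.
Proof.
move=> hp hA; apply/matrixP => i j.
have hE := isdiag_epow hp hA.
rewrite [RHS](diag_mulE _ _ _ hE) /epow !mxE -exprMn; congr (_ ^+ _).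
by rewrite -(diag_mulE _ _ _ hA) mxE.
Qed.

Lemma isdiagX (C : fieldType) (n : nat) (A : 'M[C]_n) m : isdiag A -> isdiag (A ^+ m).
Proof.
move=> hA; elim: m => [|m IH]; first by move=> i j /negbTE ij; rewrite expr0 mxE ij.
by rewrite exprS -mulmxE; apply: isdiag_mul.
Qed.

Lemma epow1 (C : fieldType) (n p : nat) : (0 < p)%N -> epow p (1%:M : 'M[C]_n) = 1%:M.
Proof.
move=> hp; apply/matrixP => i j; rewrite !mxE.
by case: (i == j); rewrite ?expr1n ?expr0n //= eqn0Ngt hp.
Qed.

Lemma diagT_X (C : fieldType) (n p : nat) (v : 'M[C]_n) : (0 < p)%N -> diagT v -> Xset p v.
Proof.
move=> hp [hv hd]; split => // m; split.
  elim: m => [|m IH]; first by rewrite !expr0 epow1.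
  by rewrite !exprS -!mulmxE epow_diagM // IH.
rewrite -epow_diagM ?mulmxV ?epow1 //; first exact: unitmxX.
exact: isdiagX.
Qed.

Section Nak.
Variables (C : fieldType) (n : nat) (Z : 'M[C]_n -> Prop).
Hypothesis Z1 : Z 1%:M.
Hypothesis hprime : forall f g : 'M[C]_n -> C, polyf f -> polyf g ->
  (forall v, Z v -> f v * g v = 0) -> (forall v, Z v -> f v = 0) \/ (forall v, Z v -> g v = 0).

Section Span.
Variables (G : finType) (g : G -> 'M[C]_n -> C).
Hypothesis hg : forall x, polyf (g x).

Definition mspan (A : {set G}) (f : 'M[C]_n -> C) :=
  exists c : G -> 'M[C]_n -> C, (forall y, polyf (c y) /\ c y 1%:M = 0) /\
    forall v, Z v -> f v = \sum_(y in A) c y v * g y v.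

Lemma nak_aux k : forall (A : {set G}) h, #|A| = k -> polyf h -> h 1%:M != 0 ->
  (forall x, x \in A -> mspan A (fun v => h v * g x v)) ->
  forall x, x \in A -> forall v, Z v -> g x v = 0.
Proof.
elim: k => [|k IH] A h hk hh h1 hA x xA.
  by move: xA; rewrite (cards0_eq hk) inE.
have [x0 x0A] : exists x0, x0 \in A.
  by apply/set0Pn; apply/negP => /eqP e; move: hk; rewrite e cards0.
have [c [hc Ec]] := hA x0 x0A.
set h' := fun v => h v - c x0 v.
have ph' : polyf h' by apply: polyf_sub => //; exact: (hc x0).1.
have h'1 : h' 1%:M != 0 by rewrite /h' (hc x0).2 subr0.
have E0 : forall v, Z v -> h' v * g x0 v = \sum_(y in A :\ x0) c y v * g y v.
  move=> v zv; rewrite /h' mulrBl Ec // (big_setD1 x0) //=.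
  by rewrite addrAC subrr add0r.
have hk' : #|A :\ x0| = k by move: hk; rewrite (cardsD1 x0) x0A add1n => -[].
have rest : forall x, x \in A :\ x0 -> forall v, Z v -> g x v = 0.
  apply: (IH (A :\ x0) (fun v => h' v * h v)) => //.
  - exact: polyf_mul.
  - by rewrite mulf_neq0.
  move=> x1 x1A; have x1A' : x1 \in A by move: x1A; rewrite inE => /andP [].
  have [d [hd Ed]] := hA x1 x1A'.
  exists (fun y v => d x0 v * c y v + h' v * d y v); split.
    move=> y; split; last by rewrite (hc y).2 (hd y).2 !mulr0 addr0.
    apply: polyf_add; apply: polyf_mul; by [apply: (hd _).1 | apply: (hc _).1 |].
  move=> v zv; rewrite -mulrA Ed // (big_setD1 x0) //= mulrDr.
  rewrite mulrCA E0 // !mulr_sumr -big_split /=; apply: eq_bigr => y _; ring.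
case: (eqVneq x x0) => [->|xx0]; last first.
  by apply: rest; rewrite !inE xx0.
have : (forall v, Z v -> h' v * g x0 v = 0).
  by move=> v zv; rewrite E0 // big1 // => y yA; rewrite rest // mulr0.
case/(hprime ph' (hg x0)) => // hz; move/negP: h'1; by rewrite hz.
Qed.

End Span.

Section J.
Variables (I : finType) (y : I -> 'M[C]_n -> C).
Hypothesis hy : forall a, polyf (y a).

Fixpoint Jp (d : nat) (f : 'M[C]_n -> C) : Prop :=
  match d with
  | 0 => exists q, polyf q /\ forall v, Z v -> f v = q v
  | d'.+1 => exists c : I -> 'M[C]_n -> C, (forall a, Jp d' (c a)) /\
               forall v, Z v -> f v = \sum_a y a v * c a v
  end.

Lemma Jp_ext d f g : (forall v, Z v -> f v = g v) -> Jp d f -> Jp d g.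
Proof.
case: d => [|d] e [q [hq E]]; exists q; split => // v zv; by rewrite -e ?E.
Qed.

Lemma Jp_polyf q : polyf q -> Jp 0 q.
Proof. by move=> hq; exists q. Qed.

Lemma Jp_poly d q f : polyf q -> Jp d f -> Jp d (fun v => q v * f v).
Proof.
elim: d f => [|d IH] f hq [c [hc E]].
  exists (fun v => q v * c v); split; first exact: polyf_mul hq hc.
  by move=> v zv; rewrite E.
exists (fun a v => q v * c a v); split; first by move=> a; apply: IH => //; exact: hc.
by move=> v zv; rewrite E // mulr_sumr; apply: eq_bigr => a _; rewrite mulrCA.
Qed.

Lemma Jp_0 d : Jp d (fun _ => 0).
Proof.
elim: d => [|d IH]; first by exists (fun _ => 0); split => //; exact: polyf_cst.
by exists (fun _ _ => 0); split => // v _; rewrite big1 // => a _; rewrite mulr0.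
Qed.

Lemma Jp_add d f g : Jp d f -> Jp d g -> Jp d (fun v => f v + g v).
Proof.
elim: d f g => [|d IH] f g [c [hc E]] [c' [hc' E']].
  exists (fun v => c v + c' v); split; first exact: polyf_add hc hc'.
  by move=> v zv; rewrite E ?E'.
exists (fun a v => c a v + c' a v); split; first by move=> a; apply: IH; [exact: hc | exact: hc'].
by move=> v zv; rewrite E // E' // -big_split; apply: eq_bigr => a _; rewrite mulrDr.
Qed.

Lemma Jp_sum d (J : Type) (r : seq J) (P : pred J) (F : J -> 'M[C]_n -> C) :
  (forall j, P j -> Jp d (F j)) -> Jp d (fun v => \sum_(j <- r | P j) F j v).
Proof.
move=> hF; elim: r => [|j r IH].
  by apply: Jp_ext (Jp_0 d) => v _; rewrite big_nil.
case Pj: (P j).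
  by apply: Jp_ext (Jp_add (hF j Pj) IH) => v _; rewrite big_cons Pj.
by apply: Jp_ext IH => v _; rewrite big_cons Pj.
Qed.

Lemma Jp_mul d e f g : Jp d f -> Jp e g -> Jp (d + e) (fun v => f v * g v).
Proof.
elim: d f => [|d IH] f [c [hc E]] hg.
  by apply: Jp_ext (Jp_poly hc hg) => v zv; rewrite E.
exists (fun a v => c a v * g v); split; first by move=> a; apply: IH => //; exact: hc.
by move=> v zv; rewrite E // mulr_suml; apply: eq_bigr => a _; rewrite mulrA.
Qed.

Lemma Jp_y a : Jp 1 (y a).
Proof.
exists (fun b _ => if b == a then 1 else 0); split.
  by move=> b; exists (fun _ => if b == a then 1 else 0); split => //; exact: polyf_cst.
move=> v _; rewrite (bigD1 a) //= eqxx mulr1 big1 ?addr0 // => b /negbTE ->.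
by rewrite mulr0.
Qed.

Lemma Jp_S d f : Jp d.+1 f -> Jp d f.
Proof.
move=> [c [hc E]].
have h : forall a, predT a -> Jp d (fun v => y a v * c a v).
  by move=> a _; have := Jp_mul (Jp_polyf (hy a)) (hc a); rewrite add0n.
by apply: Jp_ext (Jp_sum (index_enum I) h) => v zv; rewrite E.
Qed.

Lemma Jp_le d e f : (d <= e)%N -> Jp e f -> Jp d f.
Proof.
move=> le; rewrite -(subnKC le); elim: (e - d)%N f => [|k IH] f; first by rewrite addn0.
by rewrite addnS => /Jp_S /IH.
Qed.

Lemma Jp_exp k f : Jp 1 f -> Jp k (fun v => f v ^+ k).
Proof.
move=> hf; elim: k => [|k IH].
  by apply: Jp_ext (Jp_polyf (polyf_cst n 1)) => v _; rewrite expr0.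
by apply: Jp_ext (Jp_mul hf IH) => v _; rewrite exprS.
Qed.

Lemma Jp_prod (J : Type) (r : seq J) (P : pred J) (F : J -> 'M[C]_n -> C) (e : J -> nat) :
  (forall j, P j -> Jp (e j) (F j)) ->
  Jp (\sum_(j <- r | P j) e j) (fun v => \prod_(j <- r | P j) F j v).
Proof.
move=> hF; elim: r => [|j r IH].
  by rewrite big_nil; apply: Jp_ext (Jp_polyf (polyf_cst n 1)) => v _; rewrite big_nil.
case Pj: (P j); rewrite big_cons Pj.
  by apply: Jp_ext (Jp_mul (hF j Pj) IH) => v _; rewrite big_cons Pj.
by apply: Jp_ext IH => v _; rewrite big_cons Pj.
Qed.

Definition consf d (a : I) (s : {ffun 'I_d -> I}) : {ffun 'I_d.+1 -> I} :=
  [ffun l => if unlift ord0 l is Some l' then s l' else a].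

Definition mon d (s : {ffun 'I_d -> I}) (v : 'M[C]_n) : C := \prod_l y (s l) v.

Lemma mon_cons d a (s : {ffun 'I_d -> I}) v : mon (consf a s) v = y a v * mon s v.
Proof.
rewrite /mon big_ord_recl !ffunE unlift_none; congr (_ * _).
by apply: eq_bigr => l _; rewrite ffunE liftK.
Qed.

Lemma polyf_mon d (s : {ffun 'I_d -> I}) : polyf (mon s).
Proof. by apply: polyf_prod => l _; apply: hy. Qed.

Definition comb d f := exists c : {ffun 'I_d -> I} -> 'M[C]_n -> C,
  (forall s, polyf (c s)) /\ forall v, Z v -> f v = \sum_s c s v * mon s v.

Lemma Jp_comb d f : Jp d f -> comb d f.
Proof.
elim: d f => [|d IH] f.
  move=> [q [hq E]]; exists (fun _ => q); split => // v zv.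
  have s0 : {ffun 'I_0 -> I}.
    apply: finfun => -[m hm]; exfalso; by rewrite ltn0 in hm.
  rewrite E // (big_pred1 s0); last by move=> s; symmetry; apply/eqP/ffunP => -[].
  by rewrite /mon big_ord0 mulr1.
move=> [c [hc E]].
have : forall a, exists k : {ffun 'I_d -> I} -> 'M[C]_n -> C,
    (forall s, polyf (k s)) /\ forall v, Z v -> c a v = \sum_s k s v * mon s v.
  by move=> a; exact: IH (hc a).
case/fin_all_exists => cc hcc.
pose c' := fun (t : {ffun 'I_d.+1 -> I}) v =>
  \sum_(x : I * {ffun 'I_d -> I} | consf x.1 x.2 == t) cc x.1 x.2 v.
exists c'; split.
  by move=> t; apply: polyf_sum => x _; apply: (hcc x.1).1.
move=> v zv; rewrite E //.
transitivity (\sum_a \sum_s cc a s v * mon (consf a s) v).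
  apply: eq_bigr => a _; rewrite (hcc a).2 // mulr_sumr; apply: eq_bigr => s _.
  by rewrite mon_cons mulrCA.
rewrite pair_big /= (partition_big (fun x : I * {ffun 'I_d -> I} => consf x.1 x.2) predT) //=.
apply: eq_bigr => t _; rewrite /c' mulr_suml; apply: eq_bigr => x /eqP <-.
by [].
Qed.

Hypothesis hy1 : forall a, y a 1%:M = 0.

Lemma Jp_mspan K f : Jp K.+1 f -> mspan (@mon K) [set: {ffun 'I_K -> I}] f.
Proof.
move=> [c [hc E]].
have : forall a, exists k : {ffun 'I_K -> I} -> 'M[C]_n -> C,
    (forall s, polyf (k s)) /\ forall v, Z v -> c a v = \sum_s k s v * mon s v.
  by move=> a; exact: Jp_comb (hc a).
case/fin_all_exists => cc hcc.
exists (fun s v => \sum_a y a v * cc a s v); split.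
  move=> s; split; last by rewrite big1 // => a _; rewrite hy1 mul0r.
  by apply: polyf_sum => a _; apply: polyf_mul; [apply: hy | apply: (hcc a).1].
move=> v zv; rewrite E //.
under eq_bigr => a _ do rewrite (hcc a).2 // mulr_sumr.
rewrite exchange_big /= [RHS]big_mkcond /=; apply: eq_bigr => s _.
by rewrite inE mulr_suml; apply: eq_bigr => a _; rewrite mulrA.
Qed.

End J.

End Nak.

Lemma irr_prime (C : fieldType) (n : nat) (Z : 'M[C]_n -> Prop) : zirreducible Z ->
  forall f g : 'M[C]_n -> C, polyf f -> polyf g ->
  (forall v, Z v -> f v * g v = 0) -> (forall v, Z v -> f v = 0) \/ (forall v, Z v -> g v = 0).
Proof.
move=> [hGL [_ hirr]] f g [qf hf] [qg hg] hfg.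
have cl : forall (h : 'M[C]_n -> C) q, (forall v, h v = mx_eval q v) ->
    zclosed (fun v => inGL v /\ h v = 0).
  move=> h q hq; exists (fun r => r = q) => v; split.
    by move=> [gv hv]; split => // r ->; rewrite -hq.
  by move=> [gv hv]; split => //; rewrite hq; apply: hv.
have := hirr _ _ (cl f qf hf) (cl g qg hg).
case.
- move=> v zv; have gv := hGL v zv.
  by have /eqP := hfg v zv; rewrite mulf_eq0 => /orP [] /eqP e; [left|right].
- by move=> h; left => v zv; case: (h v zv).
- by move=> h; right => v zv; case: (h v zv).
Qed.

Section Key.
Variables (C : fieldType) (n p : nat) (Z : 'M[C]_n -> Prop).
Hypothesis hc0 : [pchar C] =i pred0.
Hypothesis hp : (2 <= p)%N.
Hypothesis Zirr : zirreducible Z.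
Hypothesis Z2 : forall v, Z v -> epow p (v ^+ 2) = (epow p v) ^+ 2.
Hypothesis Z1 : Z 1%:M.

Definition I := ('I_n * 'I_n)%type.
Definition yy (a : I) (v : 'M[C]_n) : C := if a.1 != a.2 then v a.1 a.2 else 0.
Definition uu (a : I) (v : 'M[C]_n) : C :=
  if a.1 != a.2 then (v a.1 a.1 + v a.2 a.2) ^+ p - v a.1 a.1 ^+ p - v a.2 a.2 ^+ p else 1.
Definition RR (a : I) (v : 'M[C]_n) : C :=
  \sum_(k | (k != a.1) && (k != a.2)) v a.1 k * v k a.2.
Definition QQ (a : I) (v : 'M[C]_n) : C :=
  \sum_(k | (k != a.1) && (k != a.2)) v a.1 k ^+ p * v k a.2 ^+ p.
Definition XX (a : I) (v : 'M[C]_n) : C := v a.1 a.2 * (v a.1 a.1 + v a.2 a.2).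
Definition FF (a : I) (v : 'M[C]_n) : C :=
  if a.1 != a.2 then QQ a v - ((XX a v + RR a v) ^+ p - XX a v ^+ p) else 0.

Lemma relation (v : 'M[C]_n) a : epow p (v ^+ 2) = (epow p v) ^+ 2 ->
  uu a v * yy a v ^+ p = FF a v.
Proof.
move=> /matrixP /(_ a.1 a.2); rewrite /uu /yy /FF.
case: a => i j /=; case: (eqVneq i j) => [_|ij] /=.
  by rewrite expr0n mulr_natr; case: p hp.
move=> e.
have L : epow p (v ^+ 2) i j = (\sum_k v i k * v k j) ^+ p.
  by rewrite /epow mxE expr2 -mulmxE mxE.
have Rh : (epow p v ^+ 2) i j = \sum_k v i k ^+ p * v k j ^+ p.
  by rewrite expr2 -mulmxE mxE; apply: eq_bigr => k _; rewrite /epow !mxE.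
rewrite L Rh in e.
have ji : j != i by rewrite eq_sym.
rewrite (bigD1 i) //= (bigD1 j ji) /= in e.
rewrite [in RHS](bigD1 i) //= (bigD1 j ji) /= in e.
rewrite /QQ /XX /RR /=.
set Q := \sum_(k | _) v i k ^+ p * _.
set R := \sum_(k | _) v i k * _.
move: e; set Q' := \sum_(k | _) v i k ^+ p * _.
set R' := \sum_(k | _) v i k * _.
have -> : Q' = Q by [].
have -> : R' = R by [].
have -> : v i i * v i j + (v i j * v j j + R) = v i j * (v i i + v j j) + R by ring.
move=> ->; rewrite !exprMn; ring.
Qed.

Lemma polyf_yy a : polyf (yy a).
Proof.
case E: (a.1 != a.2).
  by apply: polyf_ext (@polyf_coord C n a.1 a.2) => v; rewrite /yy E.
by apply: polyf_ext (polyf_cst n 0) => v; rewrite /yy E.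
Qed.

Notation J := (Jp Z yy).

Lemma J_ext d f g : (forall v, f v = g v) -> J d f -> J d g.
Proof. by move=> e; apply: Jp_ext => v _. Qed.

Lemma J_le d e f : (d <= e)%N -> J e f -> J d f.
Proof. move=> le h; exact: (@Jp_le C n Z I yy polyf_yy d e f le h). Qed.

Lemma J_opp d f : J d f -> J d (fun v => - f v).
Proof.
move=> h; apply: J_ext (Jp_poly (polyf_cst n (-1)) h) => v; by rewrite mulN1r.
Qed.

Lemma J_FF a : J p.+1 (FF a).
Proof.
have p1 : (1 <= p)%N by apply: leq_trans hp.
case: a => i j; case: (eqVneq i j) => [<-|ij].
  by apply: J_ext (Jp_0 Z yy _) => v; rewrite /FF /= eqxx.
have yik : forall k (v : 'M[C]_n), k != i -> v i k = yy (i, k) v by move=> k v ki; rewrite /yy /= eq_sym ki.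
have ykj : forall k (v : 'M[C]_n), k != j -> v k j = yy (k, j) v by move=> k v kj; rewrite /yy /= kj.
have JQ : J p.+1 (QQ (i, j)).
  apply: Jp_sum => k /andP [ki kj].
  have h := Jp_mul (Jp_exp p (Jp_y Z yy (i, k))) (Jp_exp p (Jp_y Z yy (k, j))).
  have le : (p.+1 <= p + p)%N by rewrite -addn1 leq_add2l.
  apply: J_ext (J_le le h).
  by move=> v; rewrite -yik // -ykj.
have JR : J 2 (RR (i, j)).
  apply: Jp_sum => k /andP [ki kj].
  apply: J_ext (Jp_mul (Jp_y Z yy (i, k)) (Jp_y Z yy (k, j))).
  by move=> v; rewrite -yik // -ykj.
have JX : J 1 (XX (i, j)).
  have hd : polyf (fun v : 'M[C]_n => v i i + v j j) by apply: polyf_add; apply: (@polyf_coord C n).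
  apply: J_ext (Jp_mul (Jp_y Z yy (i, j)) (Jp_polyf Z yy hd)).
  by move=> v; rewrite /XX /yy /= ij.
have JXR : J 1 (fun v => XX (i, j) v + RR (i, j) v).
  exact: (Jp_add JX (J_le (isT : (1 <= 2)%N) JR)).
have JD : J p.+1 (fun v => (XX (i, j) v + RR (i, j) v) ^+ p - XX (i, j) v ^+ p).
  have JS : J p.-1 (fun v => \sum_(l < p) (XX (i, j) v + RR (i, j) v) ^+ (p.-1 - l) * XX (i, j) v ^+ l).
    apply: Jp_sum => l _.
    have h := Jp_mul (Jp_exp (p.-1 - l) JXR) (Jp_exp l JX).
    have le : (p.-1 <= p.-1 - l + l)%N by rewrite subnK // -ltnS prednK.
    exact: J_le le h.
  have le : (p.+1 <= 2 + p.-1)%N by rewrite add2n prednK.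
  apply: J_ext (J_le le (Jp_mul JR JS)).
  by move=> v; rewrite subrXX addrAC subrr add0r.
apply: J_ext (Jp_add JQ (J_opp JD)) => v.
by rewrite /FF /= ij.
Qed.

Lemma polyf_uu a : polyf (uu a).
Proof.
case E: (a.1 != a.2); last by apply: polyf_ext (polyf_cst n 1) => v; rewrite /uu E.
have h : polyf (fun v : 'M[C]_n => (v a.1 a.1 + v a.2 a.2) ^+ p - v a.1 a.1 ^+ p - v a.2 a.2 ^+ p).
  apply: polyf_sub; [apply: polyf_sub|]; rewrite ?(polyf_exp); try apply: polyf_exp;
   try apply: polyf_add; apply: (@polyf_coord C n).
by apply: polyf_ext h => v; rewrite /uu E.
Qed.

Lemma count_sum K (s : {ffun 'I_K -> I}) :
  (\sum_(b : I) #|[set l | s l == b]| = K)%N.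
Proof.
rewrite -[RHS]card_ord -sum1_card (partition_big s predT) //=.
by apply: eq_bigr => b _; rewrite sum1dep_card.
Qed.

Lemma mon_count K (s : {ffun 'I_K -> I}) v :
  mon yy s v = \prod_(b : I) yy b v ^+ #|[set l | s l == b]|.
Proof.
rewrite /mon (partition_big s predT) //=; apply: eq_bigr => b _.
rewrite -prodr_const; apply: eq_big => [l|l /eqP ->] //.
by rewrite inE.
Qed.

Lemma key v : Z v -> forall i j : 'I_n, i != j -> v i j = 0.
Proof.
have hprime := irr_prime Zirr.
have hy1 : forall a, yy a 1%:M = 0.
  move=> a; rewrite /yy; case: (eqVneq a.1 a.2) => [->|ne] /=; first by rewrite ?eqxx.
  by rewrite mxE (negbTE ne).
have p1 : (1 <= p)%N by apply: leq_trans hp.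
pose K := (#|{: I}| * p.-1).+1.
pose U := fun v => \prod_(a : I) uu a v.
have pU : polyf U by apply: polyf_prod => a _; apply: polyf_uu.
have U1 : U 1%:M != 0.
  apply/prodf_neq0 => a _; rewrite /uu; case: (eqVneq a.1 a.2) => [->|ne] /=; first by rewrite ?eqxx ?oner_neq0.
  rewrite !mxE !eqxx /= expr1n.
  have le2 : (2 <= 2 ^ p)%N by rewrite -{1}(expn1 2) leq_exp2l.
  have -> : ((1 + 1 : C) ^+ p - 1 - 1) = ((2 ^ p - 2)%N)%:R.
    by rewrite natrB // natrX -addrA -opprD.
  rewrite (pcharf0P C).1 // subn_eq0 -ltnNge.
  by rewrite -{1}(expn1 2) ltn_exp2l.
have hsp : forall s : {ffun 'I_K -> I},
    mspan Z (@mon C n I yy K) [set: {ffun 'I_K -> I}] (fun v => U v * mon yy s v).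
  move=> s; apply: (Jp_mspan polyf_yy hy1).
  pose cnt b := #|[set l | s l == b]|.
  have sumc : (\sum_b cnt b = K)%N by apply: count_sum.
  have [a ha] : exists a, (p <= cnt a)%N.
    case: (pickP (fun a => p <= cnt a)%N) => [a ha|h0]; first by exists a.
    exfalso; have : (\sum_(b : I) cnt b <= \sum_(b : I) p.-1)%N.
      apply: leq_sum => b _; move: (h0 b) => /= /negbT; rewrite -ltnNge => h; lia.
    by rewrite sumc sum_nat_const ltnn.
  have sumc' : (cnt a + \sum_(b | b != a) cnt b = K)%N by rewrite -sumc [RHS](bigD1 a).
  have pF : polyf (fun v => \prod_(b | b != a) uu b v) by apply: polyf_prod => b _; apply: polyf_uu.
  have h1 := J_FF a.
  have h2 := Jp_mul (Jp_exp (cnt a - p) (Jp_y Z yy a))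
    (Jp_prod (index_enum I) (P := fun b => b != a) (e := cnt)
       (F := fun b v => yy b v ^+ cnt b) (fun b _ => Jp_exp (cnt b) (Jp_y Z yy b))).
  have h3 := Jp_poly pF (Jp_mul h1 h2).
  have le : (K.+1 <= p.+1 + ((cnt a - p) + \sum_(b | b != a) cnt b))%N by lia.
  apply: Jp_ext (J_le le h3) => w zw.
  have E1 : \prod_b uu b w = uu a w * \prod_(b | b != a) uu b w by rewrite (bigD1 a).
  have E2 : \prod_b yy b w ^+ cnt b = yy a w ^+ cnt a * \prod_(b | b != a) yy b w ^+ cnt b.
    by rewrite (bigD1 a).
  have ex : yy a w ^+ cnt a = yy a w ^+ p * yy a w ^+ (cnt a - p) by rewrite -exprD subnKC.
  rewrite /U mon_count -/cnt E1 E2 ex -(relation a (Z2 zw)).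
  move: (\prod_(b | b != a) uu b w) (\prod_(b | b != a) yy b w ^+ cnt b) => P1 P2.
  move: (uu a w) (yy a w ^+ p) (yy a w ^+ (cnt a - p)) => x1 x2 x3.
  ring.
have gz := nak_aux Z1 hprime (G := {ffun 'I_K -> I}) (g := @mon C n I yy K)
  (polyf_mon (d := K) polyf_yy) (erefl _) pU U1 (fun x _ => hsp x).
move=> zv i j ij.
have := gz [ffun _ => (i, j)] (in_setT _) v zv.
rewrite /mon (eq_bigr (fun _ => yy (i, j) v)) ?prodr_const; last by move=> l _; rewrite ffunE.
by move/eqP; rewrite expf_eq0 /yy /= ij => /andP [_ /eqP].
Qed.

End Key.

Theorem lemma3p13 (C : closedFieldType) (n p : nat) :
  uncountable C -> [pchar C] =i pred0 -> (2 <= p)%N ->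
  zclosed (Xset (C := C) (n := n) p) /\
  irr_component (Xset (C := C) (n := n) p) (@diagT C n) /\
  (forall Y : 'M[C]_n -> Prop,
     irr_component (Xset (C := C) (n := n) p) Y -> Y 1%:M -> Y = @diagT C n).
Proof.
move=> _ h0 hp.
have hp0 : (0 < p)%N by apply: leq_trans hp.
have TX : forall v, @diagT C n v -> Xset p v by move=> v; apply: diagT_X.
have Tirr : zirreducible (@diagT C n) := @diagT_irr C n h0.
have T1 : @diagT C n 1%:M.
  by split; [exact: unitmx1 | move=> i j /negbTE ij; rewrite mxE ij].
have keyZ : forall Z : 'M[C]_n -> Prop, zirreducible Z -> (forall v, Z v -> Xset p v) ->
    Z 1%:M -> forall v, Z v -> diagT v.
  move=> Z zi zx z1 v zv; split; first exact: zi.1 v zv.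
  apply: (key h0 hp zi _ z1 zv) => w zw; exact: (proj1 ((zx w zw).2 2)).
split; first exact: Xset_zclosed.
split.
  split; first exact: Tirr.
  split; first exact: TX.
  move=> Z zi zx TZ v zv; apply: (keyZ Z zi zx _ v zv); exact: TZ.
move=> Y [yi [yx ymax]] Y1.
have YT : forall v, Y v -> diagT v := keyZ Y yi yx Y1.
have TY : forall v, diagT v -> Y v := ymax _ Tirr TX YT.
apply: functional_extensionality => v; apply: propositional_extensionality; split.
  exact: YT.
exact: TY.
Qed.
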